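(* For the 0-1-loss $\ell_{0\text{-}1}(\mathrm{h},(x,y))=1-\mathrm{h}(y|x)$ (score $L(\mathrm{q},y)=1-\mathrm{q}(y)$) and $\mathbf{a},\mathbf{b}\in\mathbb{R}^m$, the problem $\mathscr{P}_{\ell_{0\text{-}1}}^{\mathbf{a},\mathbf{b}}$ is equivalent to $$\mathscr{P}_{0\text{-}1}^{\mathbf{a},\mathbf{b}}:\ \min_{\boldsymbol{\mu},\boldsymbol{\eta},\nu}\ \tfrac{1}{2}(\mathbf{b}-\mathbf{a})^{\mathrm{T}}\boldsymbol{\eta}-\tfrac{1}{2}(\mathbf{b}+\mathbf{a})^{\mathrm{T}}\boldsymbol{\mu}-\nu\ \text{ s.t. }\sum_{y\in\mathcal{Y}}(\Phi(x,y)^{\mathrm{T}}\boldsymbol{\mu}+\nu+1)_+\leq 1\ \forall x\in\mathcal{X},\ \boldsymbol{\eta}+\boldsymbol{\mu}\succeq\mathbf{0},\ \boldsymbol{\eta}-\boldsymbol{\mu}\succeq\mathbf{0}.$$ In addition, for a solution $\boldsymbol{\mu}^*,\boldsymbol{\eta}^*,\nu^*$ of $\mathscr{P}_{0\text{-}1}^{\mathbf{a},\mathbf{b}}$, the condition $\ell_{0\text{-}1}(\mathrm{h},(x,y))+\Phi(x,y)^{\mathrm{T}}\boldsymbol{\mu}^*+\nu^*\leq 0$ for all $x,y$ (which makes $\mathrm{h}$ a 0-1-MRC for $\mathcal{U}^{\mathbf{a},\mathbf{b}}$) becomes $$\mathrm{h}(y|x)\geq \Phi(x,y)^{\mathrm{T}}\boldsymbol{\mu}^*+\nu^*+1\quad\forall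 x\in\mathcal{X},y\in\mathcal{Y}.$$
   Context: Let $\mathcal{X},\mathcal{Y}$ be finite nonempty sets, $\mathcal{Y}=\{1,\dots,|\mathcal{Y}|\}$; $\Delta(\mathcal{Y})$ is the set of probability distributions on $\mathcal{Y}$. A classification rule $\mathrm{h}$ assigns to each $x$ a distribution $\mathrm{h}(\cdot|x)\in\Delta(\mathcal{Y})$. For a score function $L$ with loss $\ell(\mathrm{h},(x,y))=L(\mathrm{h}(\cdot|x),y)$: $\Phi:\mathcal{X}\times\mathcal{Y}\to\mathbb{R}^m$ is a feature mapping, $\boldsymbol{\Phi}(x,\cdot)$ is the $|\mathcal{Y}|\times m$ matrix with rows $\Phi(x,y)^{\mathrm{T}}$, $\mathbf{1}$ the all-ones vector, $\preceq,\succeq$ componentwise, $\mathcal{L}=\{\mathbf{c}\in\mathbb{R}^{|\mathcal{Y}|}:\exists\,\mathrm{q}\in\Delta(\mathcal{Y}),\ \mathbf{c}+(L(\mathrm{q},y))_y\preceq\mathbf{0}\}$, and $\mathscr{P}_{\ell}^{\mathbf{a},\mathbf{b}}$ is $\min_{\boldsymbol{\mu},\boldsymbol{\eta},\nu}\tfrac12(\mathbf{b}-\mathbf{a})^{\mathrm{T}}\boldsymbol{\eta}-\tfrac12(\mathbf{b}+\mathbf{a})^{\mathrm{T}}\boldsymbol{\mu}-\nu$ s.t. $\boldsymbol{\Phi}(x,\cdot)\boldsymbol{\mu}+\nu\mathbf{1}\in\mathcal{L}$ $\forall x$, $\boldsymbol{\eta}\pm\boldsymbol{\mu}\succeq\mathbf{0}$.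 $\mathcal{U}^{\mathbf{a},\mathbf{b}}=\{\mathrm{p}\in\Delta(\mathcal{X}\times\mathcal{Y}):\mathbf{a}\preceq\mathbb{E}_{\mathrm{p}}\{\Phi\}\preceq\mathbf{b}\}$; an $\ell$-MRC for $\mathcal{U}$ minimizes $\max_{\mathrm{p}\in\mathcal{U}}\sum_{x,y}\mathrm{p}(x,y)\ell(\mathrm{h},(x,y))$ over all classification rules. $(t)_+=\max(t,0)$. *)

(* Defs.v *)
From mathcomp Require Import all_boot all_order all_algebra.
Set Implicit Arguments. Unset Strict Implicit. Unset Printing Implicit Defensive.
Import Order.TTheory GRing.Theory Num.Theory.
Local Open Scope ring_scope.

Section Defs.
Variables (R : realFieldType) (X Y : finType) (m : nat).

Definition dotv (u v : 'I_m -> R) : R := \sum_(i < m) u i * v i.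

Definition is_distr (q : Y -> R) : Prop :=
  (forall y, 0 <= q y) /\ \sum_(y : Y) q y = 1.

(* classification rule: h y x = h(y|x), each h(.|x) in Delta(Y) *)
Definition is_rule (h : Y -> X -> R) : Prop := forall x, is_distr (fun y => h y x).

Definition Lset (L : (Y -> R) -> Y -> R) (c : Y -> R) : Prop :=
  exists q, is_distr q /\ forall y, c y + L q y <= 0.

Definition L01 (q : Y -> R) (y : Y) : R := 1 - q y.
Definition loss01 (h : Y -> X -> R) (x : X) (y : Y) : R := L01 (fun y' => h y' x) y.

Definition objective (a b mu eta : 'I_m -> R) (nu : R) : R :=
  2^-1 * dotv (fun i => b i - a i) eta - 2^-1 * dotv (fun i => b i + a i) mu - nu.

Definition feasP (L : (Y -> R) -> Y -> R) (Phi : X -> Y -> 'I_m -> R)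
  (mu eta : 'I_m -> R) (nu : R) : Prop :=
  (forall x, Lset L (fun y => dotv (Phi x y) mu + nu)) /\
  (forall i, 0 <= eta i + mu i) /\ (forall i, 0 <= eta i - mu i).

Definition feasP01 (Phi : X -> Y -> 'I_m -> R)
  (mu eta : 'I_m -> R) (nu : R) : Prop :=
  (forall x, \sum_(y : Y) Num.max 0 (dotv (Phi x y) mu + nu + 1) <= 1) /\
  (forall i, 0 <= eta i + mu i) /\ (forall i, 0 <= eta i - mu i).

Definition is_solution (feas : ('I_m -> R) -> ('I_m -> R) -> R -> Prop)
  (a b mu eta : 'I_m -> R) (nu : R) : Prop :=
  feas mu eta nu /\
  forall mu' eta' nu', feas mu' eta' nu' ->
    objective a b mu eta nu <= objective a b mu' eta' nu'.

End Defs.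

(* Main.v *)
Require Import Defs.
From mathcomp Require Import all_boot all_order all_algebra.
From mathcomp Require Import lra.
Import Order.TTheory GRing.Theory Num.Theory.
Local Open Scope ring_scope.

Lemma key (R : realFieldType) (Y : finType) (c : Y -> R) :
  (0 < #|Y|)%N ->
  Lset (@L01 R Y) c <-> \sum_(y : Y) Num.max 0 (c y + 1) <= 1.
Proof.
move=> hY; split.
  case=> q [[q0 q1] hq].
  rewrite -q1; apply: ler_sum => y _.
  rewrite ge_max q0 /=; have := hq y; rewrite /L01; lra.
set s := \sum_(y : Y) _ => hs.
have n0 : (#|Y|%:R : R) != 0 by rewrite pnatr_eq0 -lt0n.
exists (fun y => Num.max 0 (c y + 1) + (1 - s) / #|Y|%:R); split; last first.
  move=> y; rewrite /L01.
  have h1 : c y + 1 <= Num.max 0 (c y + 1) by rewrite le_max lexx orbT.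
  have h2 : 0 <= (1 - s) / #|Y|%:R by rewrite divr_ge0 ?ler0n // subr_ge0.
  lra.
split.
  move=> y; apply: addr_ge0; first by rewrite le_max lexx.
  by rewrite divr_ge0 ?ler0n // subr_ge0.
rewrite big_split /= sumr_const (_ : #|xpredT| = #|Y|); last exact: eq_card.
rewrite -/s -[_ *+ #|Y|]mulr_natr mulfVK //; lra.
Qed.

Theorem corollary4 (R : realFieldType) (X Y : finType) (m : nat)
  (Phi : X -> Y -> 'I_m -> R) (a b : 'I_m -> R) :
  (0 < #|X|)%N -> (0 < #|Y|)%N ->
  (* same objective; same feasible set *)
  (forall mu eta nu,
     feasP (@L01 R Y) Phi mu eta nu <-> feasP01 Phi mu eta nu) /\
  (* hence same solutions *)
  (forall mu eta nu,
     is_solution (feasP (@L01 R Y) Phi) a b mu eta nu <->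
     is_solution (feasP01 Phi) a b mu eta nu) /\
  (* MRC condition for a solution of P_{0-1} *)
  (forall mu eta nu, is_solution (feasP01 Phi) a b mu eta nu ->
     forall h : Y -> X -> R, is_rule h ->
       (forall x y, loss01 h x y + dotv (Phi x y) mu + nu <= 0) <->
       (forall x y, h y x >= dotv (Phi x y) mu + nu + 1)).
Proof.
move=> hX hY.
have E : forall mu eta nu,
     feasP (@L01 R Y) Phi mu eta nu <-> feasP01 Phi mu eta nu.
  move=> mu eta nu; rewrite /feasP /feasP01; split.
    case=> H1 H2; split=> // x; have := (@key _ _ (fun y => dotv (Phi x y) mu + nu) hY).1 (H1 x).
    by [].
  case=> H1 H2; split=> // x; apply/(@key _ _ _ hY); exact: H1.
split=> //; split.
  move=> mu eta nu; rewrite /is_solution; split.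
    case=> /E F H; split=> // mu' eta' nu' /E; exact: H.
  case=> /E F H; split=> // mu' eta' nu' /E; exact: H.
move=> mu eta nu _ h _; rewrite /loss01 /L01; split.
  move=> H x y; have := H x y; lra.
move=> H x y; have := H x y; lra.
Qed.
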